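(* Let $(B,\lfloor\cdot,\cdot\rfloor)$ be an SSD space with quadratic form $q$ and let $P\subset B$ be premaximally $q$-positive. Then either $\Phi_P(b)\ge q(b)$ for all $b\in B$, or $P^{\pi}=\operatorname{dom}\Phi_P$ and $P^{\pi}$ is an affine subset of $B$.
   Context: An SSD space is a pair $(B,\lfloor\cdot,\cdot\rfloor)$ with $B$ a nonzero real vector space and $\lfloor\cdot,\cdot\rfloor$ a symmetric bilinear form; $q(b)=\frac12\lfloor b,b\rfloor$. A nonempty $A\subset B$ is $q$-positive if $q(b-c)\ge0$ for all $b,c\in A$; maximally $q$-positive if $q$-positive and not properly contained in another $q$-positive set. $A^{\pi}:=\{b\in B: q(b-a)\ge0\ \forall a\in A\}$. $\Phi_A(x)=\sup_{a\in A}\{\lfloor x,a\rfloor-q(a)\}$ for nonempty $A$, and $\operatorname{dom}\Phi_A=\{x:\Phi_A(x)<+\infty\}$. A $q$-positive set $P$ is premaximally $q$-positive if there is a unique maximally $q$-positive set containing $P$. *)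

(* Defs.v *)
From HB Require Import structures.
From mathcomp Require Import all_boot all_order all_algebra.
From mathcomp Require Import all_classical all_reals ereal.
Set Implicit Arguments. Unset Strict Implicit. Unset Printing Implicit Defensive.
Import Order.TTheory GRing.Theory Num.Theory.
Local Open Scope classical_set_scope.
Local Open Scope ring_scope.

Section SSD.
Variables (R : realType) (B : lmodType R).

(* symmetric bilinear form (linearity in the first argument + symmetry
   gives bilinearity) *)
Definition sym_bilinear (f : B -> B -> R) : Prop :=
  (forall x y, f x y = f y x) /\
  (forall (a : R) x y z, f (a *: x + y) z = a * f x z + f y z).

Definition SSD (f : B -> B -> R) : Prop :=
  (exists b : B, b != 0) /\ sym_bilinear f.

Definition qf (f : B -> B -> R) (b : B) : R := f b b / 2.

Definition q_positive (f : B -> B -> R) (A : set B) : Prop :=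
  A !=set0 /\ forall b c, A b -> A c -> 0 <= qf f (b - c).

Definition max_q_positive (f : B -> B -> R) (A : set B) : Prop :=
  q_positive f A /\ forall A', q_positive f A' -> A `<=` A' -> A' = A.

Definition premax_q_positive (f : B -> B -> R) (P : set B) : Prop :=
  q_positive f P /\
  exists M, (max_q_positive f M /\ P `<=` M) /\
    forall M', max_q_positive f M' -> P `<=` M' -> M' = M.

Definition pi_set (f : B -> B -> R) (A : set B) : set B :=
  [set b | forall a, A a -> 0 <= qf f (b - a)].

Definition Phi (f : B -> B -> R) (A : set B) (x : B) : \bar R :=
  ereal_sup [set (f x a - qf f a)%:E | a in A].

Definition dom_Phi (f : B -> B -> R) (A : set B) : set B :=
  [set x | (Phi f A x < +oo)%E].

Definition affine_set (S : set B) : Prop :=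
  forall (l : R) x y, S x -> S y -> S (l *: x + (1 - l) *: y).

End SSD.

(* Main.v *)
Require Import Defs.
From HB Require Import structures.
From mathcomp Require Import all_boot all_order all_algebra.
From mathcomp Require Import all_classical all_reals ereal.
From mathcomp Require Import ring lra.
Import Order.TTheory GRing.Theory Num.Theory.
Local Open Scope classical_set_scope.
Local Open Scope ring_scope.
Set Implicit Arguments. Unset Strict Implicit.

Section Alg.
Variables (R : realType) (B : lmodType R) (f : B -> B -> R).
Hypothesis fsym : forall x y, f x y = f y x.
Hypothesis flin : forall (a : R) x y z, f (a *: x + y) z = a * f x z + f y z.

Lemma f0l z : f 0 z = 0.
Proof.
have := flin 1 0 0 z; rewrite scaler0 addr0 mul1r => /eqP.
by rewrite -subr_eq0 opprD addrA subrr sub0r oppr_eq0 => /eqP.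
Qed.
Lemma fDl x y z : f (x + y) z = f x z + f y z.
Proof. by have := flin 1 x y z; rewrite scale1r mul1r. Qed.
Lemma fZl a x z : f (a *: x) z = a * f x z.
Proof. by have := flin a x 0 z; rewrite addr0 f0l addr0. Qed.
Lemma fNl x z : f (- x) z = - f x z.
Proof. by rewrite -scaleN1r fZl mulN1r. Qed.
Lemma fBl x y z : f (x - y) z = f x z - f y z.
Proof. by rewrite fDl fNl. Qed.
Lemma fDr x y z : f z (x + y) = f z x + f z y.
Proof. by rewrite fsym fDl (fsym x) (fsym y). Qed.
Lemma fZr a x z : f z (a *: x) = a * f z x.
Proof. by rewrite fsym fZl fsym. Qed.
Lemma fBr x y z : f z (x - y) = f z x - f z y.
Proof. by rewrite fsym fBl (fsym x) (fsym y). Qed.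

Lemma qB x y : qf f (x - y) = qf f x - f x y + qf f y.
Proof.
rewrite /qf fBl !fBr (fsym y x).
by field.
Qed.
Lemma qZ r x : qf f (r *: x) = r ^+ 2 * qf f x.
Proof. rewrite /qf fZl fZr /=. by rewrite expr2 mulrA mulrA. Qed.
Lemma qNB x y : qf f (y - x) = qf f (x - y).
Proof. by rewrite -opprB /qf fNl fsym fNl opprK. Qed.
Lemma q0 : qf f 0 = 0.
Proof. by rewrite /qf f0l mul0r. Qed.
Lemma qconv s b c : qf f ((1 - s) *: b + s *: c) =
  ((1-s)^+2 * f b b + 2 * s * (1 - s) * f b c + s ^+ 2 * f c c) / 2.
Proof.
rewrite /qf !fDl !fDr !fZl !fZr (fsym c b). congr (_ / _). ring.
Qed.
End Alg.

Lemma real_key (R : realType) (d K Fbb Fbc Fcc s C : R) : 0 < d ->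
  C = 1 + `|K| + d + `|Fbb| + `|Fbc| + `|Fcc| -> s * C = d / 2 -> 0 < s -> s <= 1 ->
  (1-s)*(Fbb/2 - d) + s*K <= ((1-s)^+2*Fbb + 2*s*(1-s)*Fbc + s^+2*Fcc)/2 - d/2.
Proof.
move=> d0 HC HsC s0 s1.
have gen : forall u v : R, 0 <= u <= 1 -> u * v <= `|v|.
  move=> u v /andP[u0 u1]; have := ler_norm v; have := normr_ge0 v => n0 nv.
  have p1 : 0 <= u * (`|v| - v) by apply: mulr_ge0; lra.
  have p2 : 0 <= (1 - u) * `|v| by apply: mulr_ge0; lra.
  rewrite mulrBr in p1; rewrite mulrBl mul1r in p2; lra.
have h1 : (1-s)*Fbb <= `|Fbb| by apply: gen; apply/andP; split; lra.
have h2 : - ((1-s)*Fbc) <= `|Fbc|.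
  rewrite -mulrN -(normrN Fbc); apply: gen; apply/andP; split; lra.
have h3 : - (s*Fcc) <= `|Fcc|.
  rewrite -mulrN -(normrN Fcc); apply: gen; apply/andP; split; lra.
have hK := ler_norm K.
have key : s * (K + d - (-(1-s)*Fbb + 2*(1-s)*Fbc + s*Fcc)/2) <= s * C.
  apply: ler_wpM2l; first lra.
  rewrite HC. have := normr_ge0 Fbc; have := normr_ge0 Fbb; have := normr_ge0 Fcc. lra.
rewrite HsC in key. rewrite !expr2. nra.
Qed.

Section LC.
Variables (R : realType) (B : lmodType R) (x z a : B).
Definition lc (al be ga : R) : B := al *: x + be *: z + ga *: a.
Lemma lcD a1 b1 c1 a2 b2 c2 : lc a1 b1 c1 + lc a2 b2 c2 = lc (a1+a2) (b1+b2) (c1+c2).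
Proof. by rewrite /lc !scalerDl addrACA [_ *: x + _ + _]addrACA. Qed.
Lemma lcZ r a1 b1 c1 : r *: lc a1 b1 c1 = lc (r*a1) (r*b1) (r*c1).
Proof. by rewrite /lc !scalerDr !scalerA. Qed.
Lemma lcN a1 b1 c1 : - lc a1 b1 c1 = lc (-a1) (-b1) (-c1).
Proof. by rewrite -scaleN1r lcZ !mulN1r. Qed.
Lemma lcB a1 b1 c1 a2 b2 c2 : lc a1 b1 c1 - lc a2 b2 c2 = lc (a1-a2) (b1-b2) (c1-c2).
Proof. by rewrite lcN lcD. Qed.
Lemma lcx : x = lc 1 0 0. Proof. by rewrite /lc !scale0r !addr0 scale1r. Qed.
Lemma lcz : z = lc 0 1 0. Proof. by rewrite /lc !scale0r addr0 add0r scale1r. Qed.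
Lemma lca : a = lc 0 0 1. Proof. by rewrite /lc !scale0r !add0r scale1r. Qed.
End LC.

Section Main.
Variables (R : realType) (B : lmodType R) (f : B -> B -> R) (P : set B).
Hypothesis fsym : forall x y, f x y = f y x.
Hypothesis flin : forall (a : R) x y z, f (a *: x + y) z = a * f x z + f y z.
Hypothesis Ppos : forall b c, P b -> P c -> 0 <= qf f (b - c).

Lemma pi_iff x : pi_set f P x <-> (forall a, P a -> f x a - qf f a <= qf f x).
Proof.
split => H a Pa; have := H a Pa; rewrite /= (qB fsym flin); lra.
Qed.

Lemma dom_iff x : dom_Phi f P x <-> exists K, forall a, P a -> f x a - qf f a <= K.
Proof.
rewrite /dom_Phi /Phi /=; split.
- move=> Hlt.
  have ub a : P a -> ((f x a - qf f a)%:E <=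
     ereal_sup [set (f x a0 - qf f a0)%:E | a0 in P])%E.
    by move=> Pa; apply: ereal_sup_ubound; exists a.
  move: Hlt ub; case: (ereal_sup _) => [r| |] //= _ ub.
  + by exists r => a Pa; have := ub a Pa; rewrite lee_fin.
  + by exists 0 => a Pa; have := ub a Pa; rewrite leeNy_eq.
- move=> [K HK]; apply: (@le_lt_trans _ _ K%:E); last exact: ltry.
  by apply/ereal_supP => _ [a Pa <-]; rewrite lee_fin; exact: HK.
Qed.

Definition strict b := exists d, 0 < d /\ forall a, P a -> f b a - qf f a <= qf f b - d.

Lemma notcase1 : ~ (forall b : B, (qf f b)%:E <= Phi f P b)%E -> exists b, strict b.
Proof.
move=> /existsNP [b /negP]; rewrite -ltNge => Hlt; exists b.
have ub a : P a -> ((f b a - qf f a)%:E <= Phi f P b)%E.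
  by move=> Pa; apply: ereal_sup_ubound; exists a.
move: Hlt ub; case: (Phi f P b) => [r| |] //=.
- rewrite lte_fin => Hr ub; exists (qf f b - r); split; first lra.
  move=> a Pa; have := ub a Pa; rewrite lee_fin; lra.
- move=> _ ub; exists 1; split; first lra.
  by move=> a Pa; have := ub a Pa; rewrite leeNy_eq.
Qed.

Lemma strict_pi b : strict b -> pi_set f P b.
Proof.
move=> [d [d0 Hd]]; apply/pi_iff => a Pa; have := Hd a Pa; lra.
Qed.

Lemma pi_dom b : pi_set f P b -> dom_Phi f P b.
Proof. by move/pi_iff => H; apply/dom_iff; exists (qf f b). Qed.

Lemma P_pi a : P a -> pi_set f P a.
Proof. by move=> Pa c Pc; apply: Ppos. Qed.

Lemma gconv s b c a : f ((1-s)*:b + s*:c) a - qf f a =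
  (1-s) * (f b a - qf f a) + s * (f c a - qf f a).
Proof. rewrite (fDl flin) !(fZl flin). ring. Qed.

Lemma domC s b c : 0 <= s -> s <= 1 -> dom_Phi f P b -> dom_Phi f P c ->
  dom_Phi f P ((1-s)*:b + s*:c).
Proof.
move=> s0 s1 /dom_iff [Kb Hb] /dom_iff [Kc Hc]; apply/dom_iff.
exists ((1-s)*Kb + s*Kc) => a Pa; rewrite gconv.
apply: lerD; apply: ler_wpM2l => //; try lra; [exact: Hb|exact: Hc].
Qed.

Lemma ray b c : strict b -> dom_Phi f P c ->
  exists s, 0 < s /\ s <= 1 /\ strict ((1-s)*:b + s*:c).
Proof.
move=> [d [d0 Hd]] /dom_iff [K HK].
set C := 1 + `|K| + d + `|f b b| + `|f b c| + `|f c c|.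
have C0 : 0 < C.
  rewrite /C; have := normr_ge0 K; have := normr_ge0 (f b b);
  have := normr_ge0 (f b c); have := normr_ge0 (f c c); lra.
set s := d / 2 / C.
have s0 : 0 < s by rewrite /s; apply: divr_gt0 => //; lra.
have sC : s * C = d / 2 by rewrite /s divfK // gt_eqF.
have s1 : s <= 1.
  have : s * C <= 1 * C by rewrite sC mul1r /C;
    have := normr_ge0 K; have := normr_ge0 (f b b);
    have := normr_ge0 (f b c); have := normr_ge0 (f c c); lra.
  by rewrite ler_pM2r.
exists s; split => //; split => //.
exists (d / 2); split; first lra.
move=> a Pa; rewrite gconv (qconv fsym flin).
apply: le_trans (real_key d0 erefl sC s0 s1).
have Hb := Hd a Pa; have Hc := HK a Pa; rewrite /qf in Hb.
apply: lerD; apply: ler_wpM2l; try lra; done.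
Qed.

Hypothesis Hpi : forall b c, pi_set f P b -> pi_set f P c -> 0 <= qf f (b - c).

Lemma Dpos b0 : strict b0 -> forall x z, dom_Phi f P x -> dom_Phi f P z ->
  0 <= qf f (x - z).
Proof.
move=> sb0 x z Dx Dz.
have Db0 := pi_dom (strict_pi sb0).
have [t [t0 [t1 sbt]]] := ray sb0 Dz.
have Dc : dom_Phi f P ((1-t)*:b0 + t*:x) by apply: domC => //; lra.
have [s [s0 [s1 sp]]] := ray sbt Dc.
have := Hpi (strict_pi sp) (strict_pi sbt).
have Ebt : (1-t)*:b0 + t*:z = lc x z b0 0 t (1-t).
  by rewrite /lc scale0r add0r addrC.
have Ec : (1-t)*:b0 + t*:x = lc x z b0 t 0 (1-t).
  by rewrite /lc scale0r addr0 addrC.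
rewrite Ebt Ec !lcZ lcD lcB.
have -> : lc x z b0 ((1 - s) * 0 + s * t - 0) ((1 - s) * t + s * 0 - t)
     ((1 - s) * (1 - t) + s * (1 - t) - (1 - t)) = (s * t) *: (x - z).
  rewrite /lc.
  have -> : (1 - s) * (1 - t) + s * (1 - t) - (1 - t) = 0 by ring.
  have -> : (1 - s) * t + s * 0 - t = - (s * t) by ring.
  have -> : (1 - s) * 0 + s * t - 0 = s * t by ring.
  by rewrite scale0r addr0 scalerBr scaleNr.
rewrite (qZ fsym flin) pmulr_rge0 //; apply: exprn_gt0; exact: mulr_gt0.
Qed.

Lemma final b0 : strict b0 ->
  pi_set f P = dom_Phi f P /\ affine_set (pi_set f P).
Proof.
move=> sb0.
have DP : forall d, dom_Phi f P d -> pi_set f P d.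
  by move=> d Dd a Pa; apply: (Dpos sb0 Dd); apply/pi_dom/P_pi.
have E : pi_set f P = dom_Phi f P.
  by apply/seteqP; split => x; [exact: pi_dom | exact: DP].
split => //.
have big : forall l x y, 1 < l -> pi_set f P x -> pi_set f P y ->
    pi_set f P (l *: x + (1 - l) *: y).
  move=> l x y l1 px py a Pa.
  set mu := l / (2 * l - 1).
  have mu0 : 0 <= mu by rewrite /mu; apply: divr_ge0; lra.
  have mu1 : mu <= 1 by rewrite /mu ler_pdivrMr ?mul1r; lra.
  have Pa' := pi_dom (P_pi Pa).
  have D1 := domC mu0 mu1 Pa' (pi_dom px).
  have D2 := domC mu0 mu1 (pi_dom py) Pa'.
  have := Dpos sb0 D1 D2.
  have E1 : (1 - mu) *: a + mu *: x = lc x y a mu 0 (1 - mu).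
    by rewrite /lc scale0r addr0 addrC.
  have E2 : (1 - mu) *: y + mu *: a = lc x y a 0 (1 - mu) mu.
    by rewrite /lc scale0r add0r.
  have Ew : l *: x + (1 - l) *: y - a = lc x y a l (1 - l) (-1).
    by rewrite /lc scaleN1r.
  have Ew2 : lc x y a l (1 - l) (-1) = (2 * l - 1) *: (lc x y a mu 0 (1 - mu) - lc x y a 0 (1 - mu) mu : B)%R.
    have hn : 2 * l - 1 != 0 by rewrite gt_eqF //; lra.
    rewrite lcB lcZ; congr (lc x y a _ _ _); rewrite /mu; field => //.
  rewrite E1 E2 Ew Ew2 (qZ fsym flin) => H.
  apply: mulr_ge0 => //; exact: sqr_ge0.
move=> l x y px py.
have [l0|l0] := leP 0 l.
  have [l1|l1] := leP l 1.
    rewrite E addrC; apply: domC => //; exact: pi_dom.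
  exact: big.
have -> : l *: x + (1 - l) *: y = (1 - l) *: y + (1 - (1 - l)) *: x.
  by rewrite addrC subKr.
apply: big => //; lra.
Qed.

End Main.

Section Zorn.
Variables (R : realType) (B : lmodType R) (f : B -> B -> R) (P : set B).
Hypothesis fsym : forall x y, f x y = f y x.
Hypothesis flin : forall (a : R) x y z, f (a *: x + y) z = a * f x z + f y z.

Lemma premax_pi : premax_q_positive f P ->
  forall b c, pi_set f P b -> pi_set f P c -> 0 <= qf f (b - c).
Proof.
move=> [[Pne Ppos] [M [[Mmax PM] Huniq]]].
suff sub : pi_set f P `<=` M.
  by move=> b c pb pc; apply: Mmax.1.2; apply: sub.
move=> b pb.
set S0 := P `|` [set b].
have S0pos : forall u v, S0 u -> S0 v -> 0 <= qf f (u - v).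
  move=> u v [Pu|->] [Pv|->].
  - exact: Ppos.
  - by rewrite (qNB fsym flin); apply: pb.
  - exact: pb.
  - by rewrite subrr (q0 flin) lexx.
pose Fam := [set A : set B | forall u v, (S0 `|` A) u -> (S0 `|` A) v -> 0 <= qf f (u - v)].
have [A [FA Amax]] : exists A, Fam A /\ forall B', A `<` B' -> ~ Fam B'.
  apply: Zorn_bigcup => F FF Ftot u v Hu Hv.
  case: Hu => [S0u|[X FX Xu]]; case: Hv => [S0v|[Y FY Yv]].
  - exact: S0pos.
  - by apply: (FF Y FY); [left|right].
  - by apply: (FF X FX); [right|left].
  - have [XY|YX] := Ftot X Y FX FY.
    + by apply: (FF Y FY); right => //; apply: XY.
    + by apply: (FF X FX); right => //; apply: YX.
set M' := S0 `|` A.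
have M'max : max_q_positive f M'.
  split.
    split; first by exists b; left; right.
    exact: FA.
  move=> A' [_ A'pos] MA'.
  have FA' : Fam A'.
    by move=> u v Hu Hv; apply: A'pos; [case: Hu => // /(fun h => MA' _ (or_introl h))|
      case: Hv => // /(fun h => MA' _ (or_introl h))].
  have AA' : A `<=` A' by move=> t At; apply: MA'; right.
  have A'A : A' `<=` A.
    apply: contrapT => nA'A; apply: (Amax A') => //; split => //.
  apply/seteqP; split => // t A't; right; exact: A'A.
have PM' : P `<=` M' by move=> t Pt; left; left.
have := Huniq M' M'max PM' => <-.
by left; right.
Qed.
End Zorn.

Unset Implicit Arguments.
Theorem mainTheorem5 (R : realType) (B : lmodType R) (f : B -> B -> R)
  (P : set B) :
  SSD f -> premax_q_positive f P ->
  (forall b : B, (qf f b)%:E <= Phi f P b)%E \/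
  (pi_set f P = dom_Phi f P /\ affine_set (pi_set f P)).
Proof.
move=> [_ [fsym flin]] pm.
have Hpi := premax_pi fsym flin pm.
have Ppos := pm.1.2.
have [H|H] := pselect (forall b : B, (qf f b)%:E <= Phi f P b)%E.
  by left.
right; have [b0 sb0] := notcase1 H.
exact: (final fsym flin Ppos Hpi sb0).
Qed.
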